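(* Let $E=\langle S_e,I_e,P_e,\tau,O_1,\dots,O_n,\pi_e\rangle$ be a finite interpreted environment for $n$ agents, let $\varphi$ be a formula over $Prop$, and let $\Phi$ be a set of formulas each of the form $K_i\chi$ (some $i$), closed under subformulae of this form; let $\Phi_i=\{K_i\chi\in\Phi\}$. Let $E'$, the propositions $\mathrm{said}_i(\cdot)$, $\mathrm{Say}(\Phi)$ and $\mathrm{Know}(\Phi,A)$ be as defined in the context. Then the following are equivalent: (1) there is a tuple $A=\langle A_1,\dots,A_n\rangle$ of protocol automata for $E$ such that $\mathcal I(P_A,E),(r,0)\models\varphi\wedge\mathrm{Know}(\Phi,A)$ for all runs $r$ of $\mathcal I(P_A,E)$; (2) $\varphi\wedge\mathrm{Say}(\Phi)$ is realized in $E'$ by the joint protocol $P_{A'}$ of some tuple $A'$ of protocol automata for $E'$. Moreover, the same equivalence holds when in both (1) and (2) the automata are required to have finite state sets.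
   Context: Framework. $n$ agents; finite action sets $ACT_e$, $ACT_i$; joint actions $ACT=ACT_e\times ACT_1\times\cdots\times ACT_n$; atomic propositions $Prop$. A finite interpreted environment $E=\langle S_e,I_e,P_e,\tau,O_1,\dots,O_n,\pi_e\rangle$: finite state set $S_e$, initial states $I_e\subseteq S_e$, $P_e:S_e\to\mathcal P(ACT_e)\setminus\{\emptyset\}$, $\tau(\mathbf a):S_e\to S_e$ for each joint action $\mathbf a$, observation functions $O_i:S_e\to\mathcal O$, $\pi_e:S_e\to\{0,1\}^{Prop}$. A run is an infinite sequence $r=s_0s_1\dots$ with $s_0\in I_e$ and each $s_{m+1}=\tau(\langle a_e,a_1,\dots,a_n\rangle)(s_m)$ for some joint action with $a_e\in P_e(s_m)$; $r(m)=s_m$; $r[k..m]=s_k\dots s_m$. Local state $r_i(m)=O_i(s_0)\cdots O_i(s_m)$; $(r,m)\sim_i(r',m')$ iff $r_i(m)=r'_i(m')$. A protocol for agent $i$ is $P_i:\mathcal O^+\to\mathcal P(ACT_i)\setminus\{\emptyset\}$; $\mathcal R(\mathbf P,E)$ is the set of runs with $r(m+1)=\tau(\mathbf a)(r(m))$ for some $\mathbf a\in P_e(r(m))\times P_1(r_1(m))\times\cdots\times P_n(r_n(m))$ for all $m$; $\mathcal I(\mathbf P,E)$ interprets $p$ at $(r,m)$ by $\pi_e(r(m))(p)$. Formulas are built from $Prop$ by $\neg,\wedge,\bigcirc$ (next), $U$ (until), $\exists$, $K_i$; abbreviations $\Diamond\varphi=\mathrm{true}\,U\,\varphi$, $\Box\varphi=\neg\Diamond\neg\varphi$.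 Semantics at $(r,m)$, $r\in\mathcal R$: linear temporal operators along $r$; $\exists\varphi$ iff some $r'\in\mathcal R$ with $r'[0..m]=r[0..m]$ satisfies $\varphi$ at $(r',m)$; $K_i\varphi$ iff $\varphi$ holds at all $(r',m')$, $r'\in\mathcal R$, $(r',m')\sim_i(r,m)$. $\mathbf P$ realizes $\psi$ in $E$ if $\psi$ holds at $(r,0)$ for all $r\in\mathcal R(\mathbf P,E)$. Protocol automata: $A_i=\langle Q_i,q_i,\mu_i,\alpha_i\rangle$ with state set $Q_i$, initial state $q_i$, transition function $\mu_i:Q_i\times\mathcal O\to Q_i$ and action function $\alpha_i:Q_i\to\mathcal P(ACT_i)\setminus\{\emptyset\}$; $A_i(\epsilon)=q_i$, $A_i(\sigma\cdot o)=\mu_i(A_i(\sigma),o)$; its protocol is $P_{A_i}(\sigma)=\alpha_i(A_i(\sigma))$, and $P_A=\langle P_{A_1},\dots,P_{A_n}\rangle$. Define $(r,m)\approx_i^A(r',m')$ iff $A_i(r_i(m))=A_i(r'_i(m'))$, and a modality $K_i^A$: $\mathcal I,(r,m)\models K_i^A\chi$ iff $\mathcal I,(r',m')\models\chi$ for all points $(r',m')$ of $\mathcal I$ with $(r',m')\approx_i^A(r,m)$. Modified environment $E'=\langle S'_e,I'_e,P'_e,\tau',O'_1,\dots,O'_n,\pi'_e\rangle$ with agent actions $ACT'_i=ACT_i\times\mathcal P(\Phi_i)$: $S'_e=S_e\times\mathcal P(\Phi_1)\times\cdots\times\mathcal P(\Phi_n)$; $I'_e=I_e\times\{\emptyset\}\times\cdots\times\{\emptyset\}$;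 $P'_e(s,\Psi_1,\dots,\Psi_n)=P_e(s)$; $\tau'(\langle a_e,(a_1,\Psi'_1),\dots,(a_n,\Psi'_n)\rangle)(s,\Psi_1,\dots,\Psi_n)=(\tau(\langle a_e,a_1,\dots,a_n\rangle)(s),\Psi'_1,\dots,\Psi'_n)$; $O'_i(s,\Psi_1,\dots,\Psi_n)=O_i(s)$; $\pi'_e((s,\Psi_1,\dots,\Psi_n))(p)=\pi_e(s)(p)$ for $p\in Prop$, and for each $\chi\in\Phi_i$ a new atomic proposition $\mathrm{said}_i(\chi)$ with $\pi'_e((s,\Psi_1,\dots,\Psi_n))(\mathrm{said}_i(\chi))=1$ iff $\chi\in\Psi_i$. $\mathrm{Say}(\Phi)=\bigwedge_{i=1}^n\bigwedge_{K_i\chi\in\Phi}\Box(K_i\chi\equiv\bigcirc\,\mathrm{said}_i(K_i\chi))$ and $\mathrm{Know}(\Phi,A)=\bigwedge_{i=1}^n\bigwedge_{K_i\chi\in\Phi}\Box(K_i\chi\equiv K_i^A\chi)$. *)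

(* Defs.v *)
From HB Require Import structures.
From Stdlib Require List.
From mathcomp Require Import all_boot.
Set Implicit Arguments. Unset Strict Implicit. Unset Printing Implicit Defensive.

Inductive form (n : nat) (AP : Type) : Type :=
| FTop : form n AP
| FAtom : AP -> form n AP
| FNeg : form n AP -> form n AP
| FAnd : form n AP -> form n AP -> form n AP
| FNext : form n AP -> form n AP
| FUntil : form n AP -> form n AP -> form n AP
| FEx : form n AP -> form n AP
| FK : 'I_n -> form n AP -> form n AP.
Arguments FTop {n AP}. Arguments FAtom {n AP}. Arguments FNeg {n AP}.
Arguments FAnd {n AP}. Arguments FNext {n AP}. Arguments FUntil {n AP}.
Arguments FEx {n AP}. Arguments FK {n AP}.

Definition FDiam n AP (f : form n AP) := FUntil FTop f.
Definition FBox n AP (f : form n AP) := FNeg (FDiam (FNeg f)).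
Definition FEquiv n AP (f g : form n AP) :=
  FAnd (FNeg (FAnd f (FNeg g))) (FNeg (FAnd g (FNeg f))).

Inductive subform (n : nat) (AP : Type) : form n AP -> form n AP -> Prop :=
| sf_refl f : subform f f
| sf_neg f g : subform f g -> subform f (FNeg g)
| sf_andl f g h : subform f g -> subform f (FAnd g h)
| sf_andr f g h : subform f h -> subform f (FAnd g h)
| sf_next f g : subform f g -> subform f (FNext g)
| sf_untill f g h : subform f g -> subform f (FUntil g h)
| sf_untilr f g h : subform f h -> subform f (FUntil g h)
| sf_ex f g : subform f g -> subform f (FEx g)
| sf_K f i g : subform f g -> subform f (FK i g).

Fixpoint fmap (n : nat) (AP AP' : Type) (h : AP -> AP') (f : form n AP) : form n AP' :=
  match f with
  | FTop => FTop
  | FAtom p => FAtom (h p)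
  | FNeg g => FNeg (fmap h g)
  | FAnd g1 g2 => FAnd (fmap h g1) (fmap h g2)
  | FNext g => FNext (fmap h g)
  | FUntil g1 g2 => FUntil (fmap h g1) (fmap h g2)
  | FEx g => FEx (fmap h g)
  | FK i g => FK i (fmap h g)
  end.

(* Sets are predicates; the joint action <a_e,a_1,..,a_n> is given as a_e and
   the dependent tuple (a_i)_i.  Finiteness of S_e and of the action sets is
   imposed in the theorem by taking them to be finTypes. *)
Record env (n : nat) (Se ACTe : Type) (ACT : 'I_n -> Type) (Obs AP : Type) := Env {
  e_init : Se -> Prop;
  e_prot : Se -> ACTe -> Prop;
  e_trans : ACTe -> (forall i : 'I_n, ACT i) -> Se -> Se;
  e_obs : 'I_n -> Se -> Obs;
  e_val : Se -> AP -> bool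
}.
Arguments e_init {n Se ACTe ACT Obs AP} e. Arguments e_prot {n Se ACTe ACT Obs AP} e.
Arguments e_trans {n Se ACTe ACT Obs AP} e. Arguments e_obs {n Se ACTe ACT Obs AP} e.
Arguments e_val {n Se ACTe ACT Obs AP} e.

Definition env_wf n Se ACTe ACT Obs AP (E : @env n Se ACTe ACT Obs AP) :=
  forall s, exists a, e_prot E s a.

Definition run (S : Type) := nat -> S.

Definition local n (S Obs : Type) (O : 'I_n -> S -> Obs) (i : 'I_n) (r : run S) (m : nat)
  : seq Obs := [seq O i (r k) | k <- iota 0 m.+1].

Definition runs_of n Se ACTe ACT Obs AP (E : @env n Se ACTe ACT Obs AP)
  (P : forall i : 'I_n, seq Obs -> ACT i -> Prop) (r : run Se) : Prop :=
  e_init E (r 0) /\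
  forall m, exists (ae : ACTe) (a : forall i, ACT i),
    e_prot E (r m) ae /\ (forall i, P i (local (e_obs E) i r m) (a i)) /\
    r m.+1 = e_trans E ae a (r m).

Fixpoint sat n (S Obs AP : Type) (R : run S -> Prop) (O : 'I_n -> S -> Obs)
  (val : S -> AP -> bool) (f : form n AP) (r : run S) (m : nat) : Prop :=
  match f with
  | FTop => True
  | FAtom p => val (r m) p = true
  | FNeg g => ~ sat R O val g r m
  | FAnd g h => sat R O val g r m /\ sat R O val h r m
  | FNext g => sat R O val g r m.+1
  | FUntil g h => exists k, m <= k /\ sat R O val h r k /\
                   (forall j, m <= j -> j < k -> sat R O val g r j)
  | FEx g => exists r', R r' /\ (forall k, k <= m -> r' k = r k) /\ sat R O val g r' m
  | FK i g => forall r' m', R r' -> local O i r' m' = local O i r m -> sat R O val g r' m'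
  end.

Definition isat n Se ACTe ACT Obs AP (E : @env n Se ACTe ACT Obs AP) P
  (f : form n AP) (r : run Se) (m : nat) : Prop :=
  sat (runs_of E P) (e_obs E) (e_val E) f r m.

Definition realizes n Se ACTe ACT Obs AP (E : @env n Se ACTe ACT Obs AP) P (f : form n AP) :=
  forall r, runs_of E P r -> isat E P f r 0.

Record automaton (Obs A : Type) := Aut {
  aut_Q : Type;
  aut_q0 : aut_Q;
  aut_mu : aut_Q -> Obs -> aut_Q;
  aut_alpha : aut_Q -> A -> Prop
}.
Arguments aut_Q {Obs A} a. Arguments aut_q0 {Obs A} a. Arguments aut_mu {Obs A} a.
Arguments aut_alpha {Obs A} a.

Definition aut_wf Obs A (M : automaton Obs A) := forall q, exists a, aut_alpha M q a.
Definition aut_finite Obs A (M : automaton Obs A) :=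
  exists l : list (aut_Q M), forall q, List.In q l.

Definition aut_state Obs A (M : automaton Obs A) (sigma : seq Obs) : aut_Q M :=
  foldl (aut_mu M) (aut_q0 M) sigma.

Definition PA n Obs (ACT : 'I_n -> Type) (A : forall i, automaton Obs (ACT i))
  : forall i : 'I_n, seq Obs -> ACT i -> Prop :=
  fun i sigma a => aut_alpha (A i) (aut_state (A i) sigma) a.

Definition satKA n Se ACTe ACT Obs AP (E : @env n Se ACTe ACT Obs AP)
  (A : forall i, automaton Obs (ACT i)) (i : 'I_n) (chi : form n AP) (r : run Se) (m : nat) :=
  forall r' m', runs_of E (PA A) r' ->
    aut_state (A i) (local (e_obs E) i r' m') = aut_state (A i) (local (e_obs E) i r m) ->
    isat E (PA A) chi r' m'.

(* ---------- The set Phi of K-formulas ----------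
   Phi is given as a finite index type; element k stands for the formula
   K_{ag k} (chi k). *)
Section Modified.
Variables (n : nat) (Se ACTe : Type) (ACT : 'I_n -> Type) (Obs AP : Type).
Variable E : env Se ACTe ACT Obs AP.
Variables (Phi : finType) (ag : Phi -> 'I_n) (chi : Phi -> form n AP).

Definition Know (A : forall i, automaton Obs (ACT i)) (r : run Se) :=
  forall k m, isat E (PA A) (FK (ag k) (chi k)) r m <-> satKA E A (ag k) (chi k) r m.

Definition Phii (i : 'I_n) : {set Phi} := [set k | ag k == i].
Definition sayset (i : 'I_n) := {Psi : {set Phi} | Psi \subset Phii i}.
Definition ACT' (i : 'I_n) := (ACT i * sayset i)%type.
Definition Se' := (Se * forall i : 'I_n, sayset i)%type.
(* atomic propositions of E': Prop plus said_{ag k}(K_{ag k} chi k) for k in Phi *)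
Definition AP' := (AP + Phi)%type.

Definition Eprime : env Se' ACTe ACT' Obs AP' := {|
  e_init := fun s => e_init E s.1 /\ forall i, val (s.2 i) = set0;
  e_prot := fun s ae => e_prot E s.1 ae;
  e_trans := fun ae a s => (e_trans E ae (fun i => (a i).1) s.1, fun i => (a i).2);
  e_obs := fun i s => e_obs E i s.1;
  e_val := fun s p => match p with
                      | inl q => e_val E s.1 q
                      | inr k => k \in val (s.2 (ag k))
                      end |}.

Definition Say : form n AP' :=
  foldr (fun k acc =>
           FAnd (FBox (FEquiv (FK (ag k) (fmap inl (chi k))) (FNext (FAtom (inr k))))) acc)
        FTop (enum Phi).
End Modified.

(* Main.v *)
Require Import Defs.
From HB Require Import structures.
From mathcomp Require Import all_boot.
From mathcomp Require Import zify.
From Stdlib Require Import Lia ClassicalEpsilon Classical FunctionalExtensionality.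
Set Implicit Arguments. Unset Strict Implicit. Unset Printing Implicit Defensive.

Section Gen.
Variables (n : nat) (S ACTe : Type) (ACT : 'I_n -> Type) (Obs AP : Type).
Variable E : env S ACTe ACT Obs AP.

Definition stepE (P : forall i : 'I_n, seq Obs -> ACT i -> Prop) (r : run S) t :=
  exists (ae : ACTe) (a : forall i, ACT i),
    e_prot E (r t) ae /\ (forall i, P i (local (e_obs E) i r t) (a i)) /\
    r t.+1 = e_trans E ae a (r t).
Definition validE P r M := e_init E (r 0) /\ forall t, t < M -> stepE P r t.

Lemma runs_valid P r M : runs_of E P r -> validE P r M.
Proof. by move=> [H1 H2]; split => // t _; exact: H2. Qed.

Fixpoint gext (r : run S) (M : nat) (nxt : run S -> nat -> S) (j : nat) : run S :=
  match j with
  | 0 => r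
  | j'.+1 => fun k => if k <= M + j' then gext r M nxt j' k else nxt (gext r M nxt j') (M + j')
  end.

Lemma extendE P (HE : env_wf E) (HPw : forall i s, exists a, P i s a) r M :
  validE P r M -> exists r', runs_of E P r' /\ forall k, k <= M -> r' k = r k.
Proof.
move=> [Hi Hs].
pose ce s := proj1_sig (constructive_indefinite_description _ (HE s)).
have Hce s : e_prot E s (ce s) := proj2_sig (constructive_indefinite_description _ (HE s)).
pose cp i s := proj1_sig (constructive_indefinite_description _ (HPw i s)).
have Hcp i s : P i s (cp i s) := proj2_sig (constructive_indefinite_description _ (HPw i s)).
pose nxt (rr : run S) t := e_trans E (ce (rr t)) (fun i => cp i (local (e_obs E) i rr t)) (rr t).
pose g := gext r M nxt.
have gS j k : k <= M + j -> g j.+1 k = g j k by move=> H; rewrite /g /= H.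
have gD j d k : k <= M + j -> g (j + d) k = g j k.
  move=> H; elim: d => [|d IH]; first by rewrite addn0.
  rewrite addnS gS ?IH //; apply: leq_trans H _; rewrite leq_add2l leq_addr //.
have gle j j' k : j <= j' -> k <= M + j -> g j' k = g j k.
  by move=> Hj Hk; rewrite -(subnKC Hj) gD.
pose r' k := g k k.
have r'E j k : k <= M + j -> r' k = g j k.
  move=> H; rewrite /r'; case: (leqP k j) => Hkj.
    by rewrite (gle k j k) // leq_addl.
  by rewrite (gle j k k) // ltnW.
have r'r k : k <= M -> r' k = r k by move=> H; rewrite (r'E 0) ?addn0.
exists r'; split; last exact r'r.
split; first by rewrite r'r.
move=> t; case: (ltnP t M) => Ht.
  have [ae [a [H1 [H2 H3]]]] := Hs t Ht.
  have Hl i : local (e_obs E) i r' t = local (e_obs E) i r t.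
    rewrite /local; apply/eq_in_map => k; rewrite mem_iota add0n => /andP[_ Hk].
    by rewrite r'r //; lia.
  exists ae, a; rewrite !r'r ?(ltnW Ht) //; split => //; split => // i; by rewrite Hl.
set j := t - M.
have eMj : M + j = t by rewrite /j subnKC.
have Hl i : local (e_obs E) i r' t = local (e_obs E) i (g j) t.
  rewrite /local; apply/eq_in_map => k; rewrite mem_iota add0n => /andP[_ Hk].
  by rewrite (r'E j) //; lia.
have e1 : r' t = g j t by apply: r'E; rewrite eMj.
exists (ce (r' t)), (fun i => cp i (local (e_obs E) i r' t)).
split => //; split => //.
rewrite (r'E j.+1); last by lia.
rewrite /g /= eMj ltnn -/(g j) /nxt e1.
have -> : (fun i => cp i (local (e_obs E) i r' t)) = (fun i => cp i (local (e_obs E) i (g j) t)).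
  by apply: functional_extensionality_dep => i; rewrite Hl.
by [].
Qed.

Lemma local_eq_upto (T : Type) (O : 'I_n -> T -> Obs) i (r1 r2 : run T) m :
  (forall k, k <= m -> r1 k = r2 k) -> local O i r1 m = local O i r2 m.
Proof.
move=> H; rewrite /local; apply/eq_in_map => k; rewrite mem_iota add0n => /andP[_ Hk].
by rewrite H.
Qed.
End Gen.

Section Sat.
Variables (n : nat) (S Obs AP : Type) (R : run S -> Prop) (O : 'I_n -> S -> Obs) (val : S -> AP -> bool).

Lemma sat_box (f : form n AP) r m :
  sat R O val (FBox f) r m <-> forall j, m <= j -> sat R O val f r j.
Proof.
rewrite /FBox /FDiam /=; split.
  by move=> H j Hj; apply: NNPP => Hn; apply: H; exists j.
by move=> H [k [Hk [Hn _]]]; exact: Hn (H k Hk).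
Qed.

Lemma sat_equiv (f g : form n AP) r m :
  sat R O val (FEquiv f g) r m <-> (sat R O val f r m <-> sat R O val g r m).
Proof.
rewrite /FEquiv /=.
by case: (classic (sat R O val f r m)); case: (classic (sat R O val g r m)); tauto.
Qed.

Lemma sat_foldr (I : eqType) (g : I -> form n AP) (s : seq I) r m :
  sat R O val (foldr (fun k acc => FAnd (g k) acc) FTop s) r m <->
  forall k, k \in s -> sat R O val (g k) r m.
Proof.
elim: s => [|x s IH] /=; first by split.
split.
  move=> [H1 /IH H2] k; rewrite in_cons => /orP[/eqP -> //|]; exact: H2.
move=> H; split; first by apply: H; rewrite in_cons eqxx.
by apply/IH => k Hk; apply: H; rewrite in_cons Hk orbT.
Qed.
End Sat.

Section Bisim.
Variables (n : nat) (Se ACTe : Type) (ACT : 'I_n -> Type) (Obs AP : Type).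
Variable E : env Se ACTe ACT Obs AP.
Variables (Phi : finType) (ag : Phi -> 'I_n).
Local Unset Implicit Arguments.
Variable P' : forall i : 'I_n, seq Obs -> ACT' ACT ag i -> Prop.
Variable P : forall i : 'I_n, seq Obs -> ACT i -> Prop.
Local Set Implicit Arguments.
Hypothesis HP : forall i s (a' : ACT' ACT ag i), P' i s a' -> P i s a'.1.
Hypothesis HL : forall r'', runs_of E P r'' -> forall t,
  exists Psi : (forall i, sayset ag i), exists ae (a : forall i, ACT i),
    e_prot E (r'' t) ae /\ (forall i, P' i (local (e_obs E) i r'' t) (a i, Psi i)) /\
    r'' t.+1 = e_trans E ae a (r'' t).

Local Notation E' := (Eprime E ag).

Lemma local_fst (rho : run (Se' Se ag)) (r : run Se) :
  (forall k, (rho k).1 = r k) -> forall i m,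
  local (e_obs E') i rho m = local (e_obs E) i r m.
Proof. by move=> H i m; rewrite /local; apply/eq_map => k /=; rewrite H. Qed.

Lemma proj_run r : runs_of E' P' r -> runs_of E P (fun k => (r k).1).
Proof.
move=> [[Hi _] Hs]; split => // t.
have [ae [a [H1 [H2 H3]]]] := Hs t.
exists ae, (fun i => (a i).1); split => //; split; first by move=> i; exact: HP (H2 i).
by rewrite H3.
Qed.

Lemma lift rho r'' m : validE E' P' rho m -> runs_of E P r'' ->
  (forall k, k <= m -> (rho k).1 = r'' k) ->
  exists r2, runs_of E' P' r2 /\ (forall k, k <= m -> r2 k = rho k) /\
             forall k, (r2 k).1 = r'' k.
Proof.
move=> [Hi Hs] Hr Hag.
pose Psif t := proj1_sig (constructive_indefinite_description _ (HL Hr t)).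
have HPsi t := proj2_sig (constructive_indefinite_description _ (HL Hr t)).
pose r2 k : Se' Se ag := if k <= m then rho k else (r'' k, Psif k.-1).
have H1 k : (r2 k).1 = r'' k.
  by rewrite /r2; case: ifP => // Hk; exact: Hag.
have H2 k : k <= m -> r2 k = rho k by move=> Hk; rewrite /r2 Hk.
exists r2; split; last by split.
split; first by rewrite H2.
move=> t; case: (ltnP t m) => Ht.
  have [ae [a [Hp [Ha He]]]] := Hs t Ht.
  have Hl i : local (e_obs E') i r2 t = local (e_obs E') i rho t.
    by apply: local_eq_upto => k Hk; apply: H2; apply: leq_trans Hk (ltnW Ht).
  exists ae, a; rewrite !H2 ?(ltnW Ht) //; split => //; split => // i; by rewrite Hl.
have [ae [a [Hp [Ha He]]]] := HPsi t.
exists ae, (fun i => (a i, Psif t i)).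
have Hl := local_fst H1.
split; first by rewrite /= H1.
split; first by move=> i; rewrite Hl; exact: Ha.
have -> : r2 t.+1 = (r'' t.+1, Psif t) by rewrite /r2 ltnNge Ht.
by rewrite /= H1 He.
Qed.

Definition emptyS i : sayset ag i := exist _ set0 (sub0set _).

Lemma lift0 r'' : runs_of E P r'' ->
  exists r2, runs_of E' P' r2 /\ forall k, (r2 k).1 = r'' k.
Proof.
move=> Hr.
have Hv : validE E' P' (fun _ => (r'' 0, emptyS)) 0.
  split => //; split => //; first by case: Hr.
have Ha : forall k, k <= 0 -> ((fun _ => (r'' 0, emptyS)) k).1 = r'' k.
  by move=> k; rewrite leqn0 => /eqP ->.
have [r2 [H1 [_ H3]]] := lift Hv Hr Ha.
by exists r2.
Qed.

Lemma corr (f : form n AP) : forall r m, runs_of E' P' r ->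
  (sat (runs_of E' P') (e_obs E') (e_val E') (fmap inl f) r m <->
   sat (runs_of E P) (e_obs E) (e_val E) f (fun k => (r k).1) m).
Proof.
elim: f => [|p|g IH|g IHg h IHh|g IH|g IHg h IHh|g IH|i g IH] r m Hr /=.
- by [].
- by [].
- by have := IH r m Hr; tauto.
- by have := IHg r m Hr; have := IHh r m Hr; tauto.
- exact: IH.
- split=> -[k [Hk [H1 H2]]]; exists k; split => //; split.
  + exact/(IHh r k Hr).
  + by move=> j Hj1 Hj2; apply/(IHg r j Hr); exact: H2.
  + exact/(IHh r k Hr).
  + by move=> j Hj1 Hj2; apply/(IHg r j Hr); exact: H2.
- split.
  + move=> [r' [Hr' [Hag Hs]]]; exists (fun k => (r' k).1); split; first exact: proj_run.
    split; first by move=> k Hk; rewrite Hag.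
    exact/(IH r' m Hr').
  + move=> [r'' [Hr'' [Hag Hs]]].
    have [r2 [H2 [H2ag H2p]]] := lift (runs_valid m Hr) Hr'' (fun k Hk => esym (Hag k Hk)).
    exists r2; split => //; split => //.
    apply/(IH r2 m H2).
    have -> : (fun k => (r2 k).1) = r'' by apply: functional_extensionality.
    exact: Hs.
- split.
  + move=> H r3 m' Hr3 Hl.
    have [r2 [H2 H2p]] := lift0 Hr3.
    have e : (fun k => (r2 k).1) = r3 by apply: functional_extensionality.
    subst r3.
    apply/(IH r2 m' H2); apply: H => //.
  + move=> H r2 m' Hr2 Hl.
    apply/(IH r2 m' Hr2); apply: H => //; exact: proj_run.
Qed.
End Bisim.

Definition pb (Q : Prop) : bool := if excluded_middle_informative Q then true else false.
Lemma pbP Q : pb Q = true <-> Q.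
Proof. by rewrite /pb; case: excluded_middle_informative. Qed.

Section Dir12.
Variables (n : nat) (Se ACTe : Type) (ACT : 'I_n -> Type) (Obs AP : Type).
Variable E : env Se ACTe ACT Obs AP.
Variables (Phi : finType) (ag : Phi -> 'I_n) (chi : Phi -> form n AP).
Variable A : forall i, automaton Obs (ACT i).
Local Notation E' := (Eprime E ag).

Definition KAq i (q : aut_Q (A i)) k := forall r' m', runs_of E (PA A) r' ->
  aut_state (A i) (local (e_obs E) i r' m') = q -> isat E (PA A) (chi k) r' m'.

Lemma Psif_sub i q : [set k | (ag k == i) && pb (@KAq i q k)] \subset Phii ag i.
Proof. by apply/subsetP => k; rewrite !inE => /andP[-> _]. Qed.

Definition Psif i q : sayset ag i := exist (fun Psi : {set Phi} => Psi \subset Phii ag i) _ (@Psif_sub i q).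
Arguments Psif : clear implicits.

Definition Aprime i : automaton Obs (ACT' ACT ag i) :=
  @Aut _ _ (aut_Q (A i)) (aut_q0 (A i)) (aut_mu (A i))
    (fun q a' => aut_alpha (A i) q a'.1 /\ a'.2 = Psif i q).
Arguments Aprime : clear implicits.

Lemma dir12 (phi : form n AP) : (forall i, aut_wf (A i)) ->
  (forall r, runs_of E (PA A) r -> isat E (PA A) phi r 0 /\ Know E ag chi A r) ->
  (forall i, aut_wf (Aprime i)) /\
  realizes E' (PA Aprime) (FAnd (fmap inl phi) (Say ag chi)).
Proof.
move=> Hw H; split.
  by move=> i q; have [a Ha] := Hw i q; exists (a, Psif i q).
have HP : forall i s (a' : ACT' ACT ag i), @PA _ _ _ Aprime i s a' -> @PA _ _ _ A i s a'.1.
  by move=> i s a' [].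
have HL : forall r'', runs_of E (PA A) r'' -> forall t,
  exists Psi : (forall i, sayset ag i), exists ae (a : forall i, ACT i),
    e_prot E (r'' t) ae /\ (forall i, @PA _ _ _ Aprime i (local (e_obs E) i r'' t) (a i, Psi i)) /\
    r'' t.+1 = e_trans E ae a (r'' t).
  move=> r'' [_ Hs] t; have [ae [a [Hp [Ha He]]]] := Hs t.
  exists (fun i => Psif i (aut_state (A i) (local (e_obs E) i r'' t))), ae, a.
  by split => //; split => // i; split => //; exact: Ha.
move=> r Hr; rewrite /isat /=.
have Hr1 := proj_run HP Hr.
have [Hphi HK] := H _ Hr1.
split; first exact/(corr HP HL _ _ Hr).
rewrite /Say; apply/sat_foldr => k _.
apply/sat_box => j _; apply/sat_equiv.
change (sat (runs_of E' (PA Aprime)) (e_obs E') (e_val E') (fmap inl (FK (ag k) (chi k))) r j <->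
  e_val E' (r j.+1) (inr k) = true).
apply: iff_trans (corr HP HL _ _ Hr) _.
apply: iff_trans (HK k j) _.
have [ae [a' [Hp [Ha He]]]] := proj2 Hr j.
rewrite He /=.
have [_ ->] := Ha (ag k).
rewrite /Psif /= inE eqxx /=.
split; first by move=> HH; apply/pbP; exact: HH.
by move=> /pbP.
Qed.
End Dir12.

Section Dir21.
Variables (n : nat) (Se ACTe : Type) (ACT : 'I_n -> Type) (Obs AP : Type).
Variable E : env Se ACTe ACT Obs AP.
Hypothesis HE : env_wf E.
Variables (Phi : finType) (ag : Phi -> 'I_n) (chi : Phi -> form n AP).
Variable A' : forall i, automaton Obs (ACT' ACT ag i).
Local Notation E' := (Eprime E ag).

Definition Aof i : automaton Obs (ACT i) :=
  @Aut _ _ (aut_Q (A' i)) (aut_q0 (A' i)) (aut_mu (A' i))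
    (fun q a => exists Psi, aut_alpha (A' i) q (a, Psi)).
Arguments Aof : clear implicits.

Lemma dir21 (phi : form n AP) : (forall i, aut_wf (A' i)) ->
  realizes E' (PA A') (FAnd (fmap inl phi) (Say ag chi)) ->
  (forall i, aut_wf (Aof i)) /\
  (forall r, runs_of E (PA Aof) r -> isat E (PA Aof) phi r 0 /\ Know E ag chi Aof r).
Proof.
move=> Hw Hreal; split.
  by move=> i q; have [[a Psi] Ha] := Hw i q; exists a, Psi.
have HP : forall i s (a' : ACT' ACT ag i), @PA _ _ _ A' i s a' -> @PA _ _ _ Aof i s a'.1.
  by move=> i s [a Psi] Ha; exists Psi.
have HL : forall r'', runs_of E (PA Aof) r'' -> forall t,
  exists Psi : (forall i, sayset ag i), exists ae (a : forall i, ACT i),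
    e_prot E (r'' t) ae /\ (forall i, @PA _ _ _ A' i (local (e_obs E) i r'' t) (a i, Psi i)) /\
    r'' t.+1 = e_trans E ae a (r'' t).
  move=> r'' [_ Hs] t; have [ae [a [Hp [Ha He]]]] := Hs t.
  exists (fun i => proj1_sig (constructive_indefinite_description _ (Ha i))), ae, a.
  split => //; split => // i.
  exact: (proj2_sig (constructive_indefinite_description _ (Ha i))).
have Say_at : forall rho, runs_of E' (PA A') rho -> forall k j,
    (sat (runs_of E' (PA A')) (e_obs E') (e_val E') (FK (ag k) (fmap inl (chi k))) rho j
     <-> k \in val ((rho j.+1).2 (ag k))).
  move=> rho Hrho k j.
  have [_ HS] := Hreal rho Hrho.
  have := proj1 (sat_foldr _ _ _ _ _ _ _) HS k.
  rewrite mem_enum => /(_ isT) /sat_box /(_ j (leq0n _)) /sat_equiv.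
  by [].
move=> r Hr.
have [rho [Hrho Hrhop]] := lift0 HL Hr.
have e : (fun k => (rho k).1) = r by apply: functional_extensionality.
have [Hphi _] := Hreal rho Hrho.
split.
  have := proj1 (corr HP HL _ _ Hrho) Hphi; by rewrite e.
move=> k m; split; last first.
  move=> H r'' m' Hr'' Hl; apply: H => //; by rewrite Hl.
move=> HK r'' m' Hr'' Hst.
have [rho' [Hrho' Hrho'p]] := lift0 HL Hr''.
have e' : (fun k => (rho' k).1) = r'' by apply: functional_extensionality.
have [ae [a [Hp [Ha He]]]] := proj2 Hrho m.
have Krho : sat (runs_of E' (PA A')) (e_obs E') (e_val E') (FK (ag k) (fmap inl (chi k))) rho m.
  change (sat (runs_of E' (PA A')) (e_obs E') (e_val E') (fmap inl (FK (ag k) (chi k))) rho m).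
  apply/(corr HP HL _ _ Hrho); rewrite e; exact: HK.
have Hin : k \in val ((a (ag k)).2).
  by have := proj1 (Say_at rho Hrho k m) Krho; rewrite He.
have [ae' [b [Hp' [Hb He']]]] := proj2 Hrho' m'.
pose b' := dfwith b (a (ag k)).
have Hq : aut_state (A' (ag k)) (local (e_obs E') (ag k) rho' m') =
          aut_state (A' (ag k)) (local (e_obs E') (ag k) rho m).
  by rewrite (local_fst E Hrho'p) (local_fst E Hrhop); exact: Hst.
have Hb' : forall j, @PA _ _ _ A' j (local (e_obs E') j rho' m') (b' j).
  move=> j; rewrite /b'; case: (dfwithP b (a (ag k)) j) => [|j' _].
    rewrite /PA Hq; exact: Ha.
  exact: Hb.
pose sg t := if t <= m' then rho' t else e_trans E' ae' b' (rho' m').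
have Hv : validE E' (PA A') sg m'.+1.
  split; first by rewrite /sg leq0n; case: Hrho'.
  move=> t Ht; rewrite ltnS leq_eqVlt in Ht; case/orP: Ht => [/eqP ->|Ht].
    exists ae', b'.
    have Hl j : local (e_obs E') j sg m' = local (e_obs E') j rho' m'.
      by apply: local_eq_upto => k0 Hk0; rewrite /sg Hk0.
    rewrite /sg leqnn ltnn; split => //; split => // j; rewrite Hl; exact: Hb'.
  have [ae0 [a0 [H1 [H2 H3]]]] := proj2 Hrho' t.
  have Hl j : local (e_obs E') j sg t = local (e_obs E') j rho' t.
    by apply: local_eq_upto => k0 Hk0; rewrite /sg (leq_trans Hk0 (ltnW Ht)).
  exists ae0, a0; rewrite /sg Ht (ltnW Ht); split => //; split => // j; rewrite Hl; exact: H2.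
have HEw : env_wf E' by move=> s; exact: HE s.1.
have HPw : forall i s, exists a, @PA _ _ _ A' i s a by move=> i s; exact: Hw.
have [rho'' [Hrho'' Hag]] := extendE HEw HPw Hv.
have Krho'' : sat (runs_of E' (PA A')) (e_obs E') (e_val E') (FK (ag k) (fmap inl (chi k))) rho'' m'.
  apply/(Say_at rho'' Hrho'' k m').
  rewrite Hag // /sg ltnn /= /b' dfwith_in; exact: Hin.
have Hl : local (e_obs E') (ag k) rho' m' = local (e_obs E') (ag k) rho'' m'.
  apply: local_eq_upto => k0 Hk0; rewrite Hag ?(leq_trans Hk0) // /sg Hk0 //.
have := Krho'' rho' m' Hrho' Hl.
move/(corr HP HL _ _ Hrho'); by rewrite e'.
Qed.
End Dir21.

Theorem proposition4 (n : nat) (Se ACTe : finType) (ACT : 'I_n -> finType) (Obs AP : Type)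
  (E : env Se ACTe (fun i => ACT i : Type) Obs AP) (HE : env_wf E)
  (phi : form n AP)
  (Phi : finType) (ag : Phi -> 'I_n) (chi : Phi -> form n AP)
  (Phi_inj : forall k k', ag k = ag k' -> chi k = chi k' -> k = k')
  (Phi_closed : forall k j psi, subform (FK j psi) (FK (ag k) (chi k)) ->
                  exists k', ag k' = j /\ chi k' = psi) :
  ((exists A : forall i, automaton Obs (ACT i),
      (forall i, aut_wf (A i)) /\
      forall r, runs_of E (PA A) r -> isat E (PA A) phi r 0 /\ Know E ag chi A r)
   <->
   (exists A' : forall i, automaton Obs (ACT' (fun i => ACT i : Type) ag i),
      (forall i, aut_wf (A' i)) /\
      realizes (Eprime E ag) (PA A') (FAnd (fmap inl phi) (Say ag chi))))
  /\
  ((exists A : forall i, automaton Obs (ACT i),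
      (forall i, aut_wf (A i) /\ aut_finite (A i)) /\
      forall r, runs_of E (PA A) r -> isat E (PA A) phi r 0 /\ Know E ag chi A r)
   <->
   (exists A' : forall i, automaton Obs (ACT' (fun i => ACT i : Type) ag i),
      (forall i, aut_wf (A' i) /\ aut_finite (A' i)) /\
      realizes (Eprime E ag) (PA A') (FAnd (fmap inl phi) (Say ag chi)))).
Proof.
split; split.
- move=> [A [Hw H]]; exists (Aprime E ag chi A); exact: dir12.
- move=> [A' [Hw H]]; exists (Aof A'); exact: dir21.
- move=> [A [Hw H]]; exists (Aprime E ag chi A).
  have [Hw' Hr] := dir12 (fun i => proj1 (Hw i)) H.
  split => // i; split => //; have [l Hl] := proj2 (Hw i); by exists l.
- move=> [A' [Hw H]]; exists (Aof A').
  have [Hw' Hr] := dir21 HE (fun i => proj1 (Hw i)) H.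
  split => // i; split => //; have [l Hl] := proj2 (Hw i); by exists l.
Qed.
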